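(* In the setting described in the context, let $(x^k)_{k\in\mathbb N}$ be the sequence generated by Method 2. Then $(x^k)$ is bounded; moreover, with $\bar x:=P_{\operatorname{zer}(A+B)}(x^0)$ and $\rho:=\operatorname{dist}(x^0,\operatorname{zer}(A+B))$, $$(x^k)_{k\in\mathbb N}\subset\mathbb B\Big[\tfrac12(x^0+\bar x);\tfrac12\rho\Big],$$ where $\mathbb B[x;\gamma]:=\{y\in\mathcal H:\|y-x\|\le\gamma\}$.
   Context: Let $\mathcal H$ be a real Hilbert space with inner product $\langle\cdot,\cdot\rangle$ and norm $\|\cdot\|$. Let $A_1:\mathcal H\to\mathcal H$ be $\beta$-cocoercive for some $\beta>0$ (i.e. $\langle A_1x-A_1y,x-y\rangle\ge\beta\|A_1x-A_1y\|^2$ for all $x,y$), let $A_2:\mathcal H\to\mathcal H$ be maximally monotone and uniformly continuous, let $B:\mathcal H\rightrightarrows\mathcal H$ be maximally monotone, and set $A:=A_1+A_2$. Assume $\operatorname{zer}(A+B):=\{x:0\in Ax+Bx\}\neq\emptyset$. $J_{\alpha B}:=(I+\alpha B)^{-1}$ for $\alpha>0$, and $P_C$ denotes the orthogonal projection onto a nonempty closed convex set $C$. Fix $\theta,\delta\in(0,1)$, $\bar\delta>0$ with $1-\delta-\bar\delta>0$, and $\alpha_{-1}>0$ with $\alpha_{-1}\le4\beta\bar\delta$. Conceptual Algorithm: pick $x^0\in\mathcal H$. Given $x^k$ and $\alpha_{k-1}$, for $j\in\mathbb N$ let $\bar x^k_j:=J_{\alpha_{k-1}\theta^jB}(x^k-\alpha_{k-1}\theta^jAx^k)$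 and let $j(k)$ be the smallest $j\in\mathbb N$ with $\alpha_{k-1}\theta^j\langle A_2x^k-A_2\bar x^k_j,x^k-\bar x^k_j\rangle\le\delta\|x^k-\bar x^k_j\|^2$. Set $\alpha_k:=\alpha_{k-1}\theta^{j(k)}$, $\bar x^k:=J_{\alpha_kB}(x^k-\alpha_kAx^k)$, $r_k:=\frac{\bar\delta}{\alpha_k}\|x^k-\bar x^k\|^2$, $T_k:=\{x\in\mathcal H:\langle \frac{x^k-\bar x^k}{\alpha_k}-(A_2x^k-A_2\bar x^k),x-\bar x^k\rangle\le r_k\}$ and $\Gamma_k:=\{x\in\mathcal H:\langle x^0-x^k,x-x^k\rangle\le0\}$. Method 2 sets $x^{k+1}:=P_{T_k\cap\Gamma_k}(x^0)$ and stops if $x^{k+1}=x^k$. *)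

(* Defs.v *)
From HB Require Import structures.
From mathcomp Require Import all_boot all_order all_algebra.
From mathcomp Require Import classical_sets reals.
Set Implicit Arguments. Unset Strict Implicit. Unset Printing Implicit Defensive.
Import Order.TTheory GRing.Theory Num.Theory.
Local Open Scope ring_scope.
Local Open Scope classical_set_scope.

Section Hilbert.
Variables (R : realType) (V : lmodType R) (ip : V -> V -> R).

Record inner_product : Prop := InnerProduct {
  ip_sym : forall x y, ip x y = ip y x;
  ip_linl : forall (a : R) x y z, ip (a *: x + y) z = a * ip x z + ip y z;
  ip_ge0 : forall x, 0 <= ip x x;
  ip_eq0 : forall x, ip x x = 0 -> x = 0 }.

Definition hnorm (x : V) : R := Num.sqrt (ip x x).

Definition cauchy_seq (u : nat -> V) : Prop :=
  forall e : R, 0 < e -> exists N : nat, forall m n : nat,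
    (N <= m)%N -> (N <= n)%N -> hnorm (u m - u n) < e.

Definition converges_to (u : nat -> V) (l : V) : Prop :=
  forall e : R, 0 < e -> exists N : nat, forall n : nat, (N <= n)%N -> hnorm (u n - l) < e.

Definition hilbert : Prop :=
  inner_product /\ forall u, cauchy_seq u -> exists l, converges_to u l.

(* set-valued operators are relations: B x u means u \in B x *)
Definition monotone_op (B : V -> V -> Prop) : Prop :=
  forall x y u v, B x u -> B y v -> 0 <= ip (u - v) (x - y).

Definition maximally_monotone (B : V -> V -> Prop) : Prop :=
  monotone_op B /\
  forall x u, (forall y v, B y v -> 0 <= ip (u - v) (x - y)) -> B x u.

Definition graph (A : V -> V) : V -> V -> Prop := fun x u => u = A x.

Definition cocoercive (beta : R) (A : V -> V) : Prop :=
  forall x y, beta * hnorm (A x - A y) ^+ 2 <= ip (A x - A y) (x - y).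

Definition unif_continuous (A : V -> V) : Prop :=
  forall e : R, 0 < e -> exists d : R, 0 < d /\
    forall x y, hnorm (x - y) < d -> hnorm (A x - A y) < e.

(* p = J_{a B} z, i.e. z \in p + a B p *)
Definition resolvent (B : V -> V -> Prop) (a : R) (z p : V) : Prop :=
  B p (a^-1 *: (z - p)).

Definition zer_sum (A : V -> V) (B : V -> V -> Prop) : set V :=
  [set x | B x (- A x)].

Definition is_proj (C : set V) (x p : V) : Prop :=
  C p /\ forall y, C y -> hnorm (x - p) <= hnorm (x - y).

Definition dist_set (x : V) (C : set V) : R :=
  inf [set hnorm (x - y) | y in C].

Definition cball (c : V) (g : R) : set V := [set y | hnorm (y - c) <= g].

Definition Tset (A2 : V -> V) (dbar a : R) (xk xbk : V) : set V :=
  [set x | ip (a^-1 *: (xk - xbk) - (A2 xk - A2 xbk)) (x - xbk)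
           <= dbar / a * hnorm (xk - xbk) ^+ 2].

Definition Gset (x0 xk : V) : set V := [set x | ip (x0 - xk) (x - xk) <= 0].

Definition ls_ok (A2 : V -> V) (delta s : R) (x p : V) : Prop :=
  s * ip (A2 x - A2 p) (x - p) <= delta * hnorm (x - p) ^+ 2.

(* One step k of Method 2 (with Conceptual Algorithm line search):
   given x^k and alpha_{k-1} (aprev), it produces alpha_k = aprev * theta^j(k),
   xbar^k = J_{alpha_k B}(x^k - alpha_k A x^k), and x^{k+1} = P_{T_k cap Gamma_k}(x^0). *)
Definition method2_step (A1 A2 : V -> V) (B : V -> V -> Prop)
    (theta delta dbar : R) (x0 xk : V) (aprev ak : R) (xbk xk1 : V) : Prop :=
  exists j : nat,
    [/\ ak = aprev * theta ^+ j,
        resolvent B ak (xk - ak *: (A1 xk + A2 xk)) xbk,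
        ls_ok A2 delta ak xk xbk,
        (forall i : nat, (i < j)%N -> forall p : V,
            resolvent B (aprev * theta ^+ i)
              (xk - (aprev * theta ^+ i) *: (A1 xk + A2 xk)) p ->
            ~ ls_ok A2 delta (aprev * theta ^+ i) xk p) &
        is_proj (Tset A2 dbar ak xk xbk `&` Gset x0 xk) x0 xk1].

End Hilbert.

(* Main.v *)
Require Import Defs.
From HB Require Import structures.
From mathcomp Require Import all_boot all_order all_algebra.
From mathcomp Require Import classical_sets reals.
From mathcomp Require Import lra.
Import Order.TTheory GRing.Theory Num.Theory.
Local Open Scope ring_scope.
Local Open Scope classical_set_scope.

Section IP.
Context {R : realType} {V : lmodType R} {ip : V -> V -> R}.
Hypothesis hip : inner_product ip.

Lemma ipDl x y z : ip (x + y) z = ip x z + ip y z.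
Proof. by have := ip_linl hip 1 x y z; rewrite scale1r mul1r. Qed.
Lemma ip0l z : ip 0 z = 0.
Proof. have := ipDl 0 0 z; rewrite addr0; lra. Qed.
Lemma ipZl a x z : ip (a *: x) z = a * ip x z.
Proof. by have := ip_linl hip a x 0 z; rewrite addr0 ip0l addr0. Qed.
Lemma ipNl x z : ip (- x) z = - ip x z.
Proof. by rewrite -scaleN1r ipZl mulN1r. Qed.
Lemma ipBl x y z : ip (x - y) z = ip x z - ip y z.
Proof. by rewrite ipDl ipNl. Qed.
Lemma ipDr x y z : ip z (x + y) = ip z x + ip z y.
Proof. by rewrite !(ip_sym hip z) ipDl. Qed.
Lemma ipZr a x z : ip z (a *: x) = a * ip z x.
Proof. by rewrite !(ip_sym hip z) ipZl. Qed.
Lemma ipNr x z : ip z (- x) = - ip z x.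
Proof. by rewrite !(ip_sym hip z) ipNl. Qed.
Lemma ipBr x y z : ip z (x - y) = ip z x - ip z y.
Proof. by rewrite ipDr ipNr. Qed.
Lemma hnorm_sq x : hnorm ip x ^+ 2 = ip x x.
Proof. by rewrite sqr_sqrtr // ip_ge0. Qed.
Lemma hnorm_ge0 x : 0 <= hnorm ip x.
Proof. exact: sqrtr_ge0. Qed.

Lemma ip_sq_sub d e k : ip (d - k *: e) (d - k *: e) =
  ip d d - 2 * k * ip d e + k ^+ 2 * ip e e.
Proof. rewrite ipBl !ipBr !ipZl !ipZr (ip_sym hip e d); rewrite expr2; lra. Qed.

Lemma ip_par a c : ip (a + c) (a + c) <= 2 * ip a a + 2 * ip c c.
Proof.
have := ip_ge0 hip (a - c).
rewrite !(ipBl, ipBr, ipDl, ipDr, ipNl, ipNr) (ip_sym hip c a); lra.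
Qed.

Lemma half_convex w q r p z t : ip w (p - q) <= r -> ip w (z - q) <= r ->
  0 <= t <= 1 -> ip w ((p + t *: (z - p)) - q) <= r.
Proof.
move=> h1 h2 /andP[t0 t1].
have -> : p + t *: (z - p) - q = (p - q) + t *: ((z - q) - (p - q)).
  by rewrite opprB addrA subrK addrAC.
rewrite ipDr ipZr (ipBr (z - q) (p - q)).
set a := ip w (p - q); set b := ip w (z - q).
have ha : 0 <= r - a by rewrite subr_ge0.
have hb : 0 <= r - b by rewrite subr_ge0.
have ht : 0 <= 1 - t by rewrite subr_ge0.
have := mulr_ge0 ht ha; have := mulr_ge0 t0 hb.
idtac.
lra.
Qed.

Lemma proj_char (C : set V) x0 p z :
  is_proj ip C x0 p ->
  (forall t, 0 <= t <= 1 -> C (p + t *: (z - p))) ->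
  ip (x0 - p) (z - p) <= 0.
Proof.
move=> [Cp Hp] Hc.
set s := ip (x0 - p) (z - p); set q := ip (z - p) (z - p).
rewrite leNgt; apply/negP => s0.
have q0 : 0 <= q by apply: ip_ge0.
have sq0 : s + q != 0 by rewrite gt_eqF // ltr_wpDr.
pose t := s / (s + q).
have ht : t * (s + q) = s by rewrite /t mulfVK.
have t0 : 0 < t by rewrite /t divr_gt0 // ltr_wpDr.
have t1 : t <= 1 by rewrite /t ler_pdivrMr ?mul1r ?lerDl // ltr_wpDr.
have Ht : 0 <= t <= 1 by rewrite ltW.
have := Hp _ (Hc t Ht).
have -> : x0 - (p + t *: (z - p)) = (x0 - p) - t *: (z - p) by rewrite opprD addrA.
rewrite /hnorm ler_sqrt ?ip_ge0 //. rewrite ip_sq_sub -/s -/q.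
move=> h.
have h2 : 2 * s <= t * q by nra.
nra.
Qed.

Lemma zer_in_T (A1 A2 : V -> V) (B : V -> V -> Prop) beta dbar a x p z :
  0 < beta -> cocoercive ip beta A1 -> monotone_op ip (graph A2) ->
  monotone_op ip B -> 0 < a -> a <= 4 * beta * dbar ->
  resolvent B a (x - a *: (A1 x + A2 x)) p ->
  zer_sum (fun v => A1 v + A2 v) B z -> Tset ip A2 dbar a x p z.
Proof.
move=> b0 coc mA2 mB a0 aub Hp Hz; rewrite /Tset /=.
set d := x - p; set e := z - p; set g := A1 x - A1 z.
have hu : a^-1 *: (x - a *: (A1 x + A2 x) - p) = a^-1 *: d - (A1 x + A2 x).
  rewrite /d addrAC scalerBr scalerA mulVf ?gt_eqF // scale1r //.
have m1 := mB _ _ _ _ Hp Hz; rewrite hu in m1.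
have hpz : p - z = - e by rewrite /e opprB.
rewrite hpz ipNr !ipBl ipNl !ipDl ipZl in m1.
have m2 := mA2 p z (A2 p) (A2 z) erefl erefl.
rewrite hpz ipNr ipBl in m2.
have he : e = d - (x - z) by rewrite /e /d opprB addrC addrA addrAC (addrAC x) subrr add0r.
have hge : ip g e = ip g d - ip g (x - z) by rewrite he ipBr.
have hge2 : ip g e = ip (A1 x) e - ip (A1 z) e by rewrite ipBl.
have c1 := coc x z; rewrite -/g hnorm_sq in c1.
have y0 := ip_ge0 hip (d - (2 * beta) *: g).
rewrite ip_sq_sub (ip_sym hip d g) expr2 in y0.
have hY : 4 * beta * (ip g d - beta * ip g g) <= ip d d.
  nra.
have hY2 : ip g d - beta * ip g g <= ip d d / (4 * beta).
  by rewrite ler_pdivlMr ?mulr_gt0 // mulrC.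
have hdd : ip d d / (4 * beta) <= dbar / a * hnorm ip d ^+ 2.
  rewrite hnorm_sq mulrC; apply: ler_wpM2r; first exact: ip_ge0.
  rewrite ler_pdivlMr // -[X in _ <= X]mul1r ler_pdivrMl ?mulr_gt0 //.
  by rewrite mul1r.
rewrite (ipBl (a^-1 *: d)) ipZl (ipBl (A2 x)).
lra.
Qed.

Lemma step_ok (A1 A2 : V -> V) (B : V -> V -> Prop) theta delta dbar beta am1
    x0 xk a ak xbk xk1 :
  0 < beta -> cocoercive ip beta A1 -> monotone_op ip (graph A2) ->
  monotone_op ip B -> 0 < theta < 1 -> 0 < a -> a <= am1 ->
  am1 <= 4 * beta * dbar ->
  (forall z, zer_sum (fun v => A1 v + A2 v) B z -> Gset ip x0 xk z) ->
  method2_step ip A1 A2 B theta delta dbar x0 xk a ak xbk xk1 ->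
  [/\ 0 < ak, ak <= am1 &
    forall z, zer_sum (fun v => A1 v + A2 v) B z -> Gset ip x0 xk1 z].
Proof.
move=> b0 coc mA2 mB /andP[th0 th1] a0 aam aub HG [j [hak hres _ _ hproj]].
have tj0 : 0 < theta ^+ j by apply: exprn_gt0.
have tj1 : theta ^+ j <= 1 by apply: exprn_ile1; rewrite ltW.
have ak0 : 0 < ak by rewrite hak mulr_gt0.
have akm : ak <= am1 by rewrite hak (le_trans _ aam) // ler_piMr // ltW.
split => // z Hz.
have HzC : (Tset ip A2 dbar ak xk xbk `&` Gset ip x0 xk) z.
  split; last exact: HG.
  apply: (zer_in_T _ _ _ _ _ _ _ _ _ b0 coc mA2 mB ak0 _ hres Hz); exact: le_trans akm aub.
apply: (proj_char _ _ _ _ hproj) => t Ht.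
have [[T1 G1] _] := hproj.
case: HzC => T2 G2.
split; [exact: half_convex | exact: half_convex].
Qed.
End IP.

Theorem lemma4p13 (R : realType) (V : lmodType R) (ip : V -> V -> R)
  (A1 A2 : V -> V) (B : V -> V -> Prop) (beta theta delta dbar am1 : R)
  (x : nat -> V) (alpha : nat -> R) (xb : nat -> V) (xbar : V) :
  hilbert ip ->
  0 < beta -> cocoercive ip beta A1 ->
  maximally_monotone ip (graph A2) -> unif_continuous ip A2 ->
  maximally_monotone ip B ->
  (exists z, zer_sum (fun v => A1 v + A2 v) B z) ->
  0 < theta < 1 -> 0 < delta < 1 -> 0 < dbar -> 0 < 1 - delta - dbar ->
  0 < am1 -> am1 <= 4 * beta * dbar ->
  (forall k : nat, (forall i : nat, (i < k)%N -> x i.+1 <> x i) ->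
     method2_step ip A1 A2 B theta delta dbar (x 0%N) (x k)
       (if k is k'.+1 then alpha k' else am1) (alpha k) (xb k) (x k.+1)) ->
  is_proj ip (zer_sum (fun v => A1 v + A2 v) B) (x 0%N) xbar ->
  (exists M : R, forall k : nat,
     (forall i : nat, (i.+1 < k)%N -> x i.+1 <> x i) -> hnorm ip (x k) <= M) /\
  (forall k : nat,
     (forall i : nat, (i.+1 < k)%N -> x i.+1 <> x i) ->
     cball ip (2^-1 *: (x 0%N + xbar))
       (2^-1 * dist_set ip (x 0%N) (zer_sum (fun v => A1 v + A2 v) B)) (x k)).
Proof.
move=> [hip _] b0 coc [mA2 _] _ [mB _] _ hth _ dbar0 _ am0 aub Hstep Hproj.
set Z := zer_sum (fun v => A1 v + A2 v) B.
set x0 := x 0%N.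
have H : forall k, (forall i, (i < k)%N -> x i.+1 <> x i) ->
    [/\ 0 < alpha k, alpha k <= am1 & forall z, Z z -> Gset ip x0 (x k.+1) z].
  elim=> [|k IH] hk.
    apply: (@step_ok _ _ _ hip A1 A2 B theta delta dbar beta am1 _ _ _ _ _ _ b0 coc mA2 mB hth am0 (lexx _) aub _ (Hstep 0%N hk)).
    by move=> z _; rewrite /Gset /= subrr ip0l.
  have hk' : forall i, (i < k)%N -> x i.+1 <> x i by move=> i hi; apply: hk; apply: ltnW.
  have [a0 am HG] := IH hk'.
  exact: (@step_ok _ _ _ hip A1 A2 B theta delta dbar beta am1 _ _ _ _ _ _ b0 coc mA2 mB hth a0 am aub HG (Hstep k.+1 hk)).
have HG : forall k, (forall i, (i.+1 < k)%N -> x i.+1 <> x i) ->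
    ip (x0 - x k) (xbar - x k) <= 0.
  case=> [|m] hm; first by rewrite /x0 subrr ip0l.
  have [_ _ HG] := H m (fun i hi => hm i hi).
  exact: HG _ Hproj.1.
have HD : dist_set ip x0 Z = hnorm ip (x0 - xbar).
  apply/eqP; rewrite eq_le; apply/andP; split.
    apply: ge_inf; last by exists xbar => //; exact: Hproj.1.
    by exists 0 => _ [y _ <-]; apply: hnorm_ge0.
  apply: lb_le_inf; first by exists (hnorm ip (x0 - xbar)), xbar => //; exact: Hproj.1.
  by move=> _ [y Zy <-]; apply: Hproj.2.
set c := 2^-1 *: (x0 + xbar).
set r := 2^-1 * hnorm ip (x0 - xbar).
have r0 : 0 <= r by rewrite mulr_ge0 ?invr_ge0 ?hnorm_ge0.
have Hball : forall k, (forall i, (i.+1 < k)%N -> x i.+1 <> x i) ->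
    hnorm ip (x k - c) <= r.
  move=> k hk; have hg := HG k hk.
  have hA : ip (x k - c) (x k - c) <= 2^-1 * 2^-1 * ip (x0 - xbar) (x0 - xbar).
    move: hg; rewrite /c.
    rewrite !(ipBl hip, ipBr hip, ipDl hip, ipDr hip, ipZl hip, ipZr hip, ipNl hip, ipNr hip).
    rewrite ?(ip_sym hip x0 (x k)) ?(ip_sym hip xbar (x k)) ?(ip_sym hip xbar x0).
    lra.
  have e1 := hnorm_sq hip (x k - c); have e2 := hnorm_sq hip (x0 - xbar).
  rewrite expr2 in e1 e2.
  have := hnorm_ge0 (ip:=ip) (x k - c); have := hnorm_ge0 (ip:=ip) (x0 - xbar).
  rewrite /r; nra.
split; last by move=> k hk; rewrite /cball /= HD; apply: Hball.
exists (Num.sqrt (2 * r ^+ 2 + 2 * ip c c)) => k hk.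
have hb := Hball k hk.
have ha : ip (x k - c) (x k - c) <= r ^+ 2.
  rewrite -(hnorm_sq hip); have := hnorm_ge0 (ip:=ip) (x k - c); nra.
rewrite /hnorm ler_sqrt; last by rewrite addr_ge0 // mulr_ge0 // ?sqr_ge0 ?(ip_ge0 hip).
have := ip_par hip (x k - c) c; rewrite subrK; lra.
Qed.
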